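(* Let $(X_j,d_j)$, $j\in\mathbb N$, be nonempty metric spaces that are equibounded (there is $D>0$ with $\operatorname{diam}_{d_j}(X_j)\le D$ for all $j$) and equicompact (for every $R\in(0,D]$ there is $N(R)\in\mathbb N$ such that every $X_j$ is covered by $N(R)$ open balls of radius $R$ centered at points of $X_j$). Let $\varepsilon_i=2^{-i}$ and let $N_i\in\mathbb N$ ($i\in\mathbb N$) be such that every $X_j$ can be covered by $N_i$ open balls of radius $\varepsilon_i$ centered at points of $X_j$. For $i\in\mathbb N$ let $$A_i=\{(a_1,\dots,a_i):1\le a_k\le N_k\text{ for }k=1,\dots,i\},$$ let $p_i:A_{i+1}\to A_i$, $p_i(a_1,\dots,a_{i+1})=(a_1,\dots,a_i)$, and let $A=\bigsqcup_{i=1}^\infty A_i$ (a countable set not depending on $j$). Then for every $j$ there exist maps $I^j_i:A_i\to X_j$ ($i\in\mathbb N$), combined into $I^j:A\to X_j$ with $I^j(a)=I^j_i(a)$ for $a\in A_i$, writing $x^j_a=I^j(a)$, such that: (1) for every $i\in\mathbb N$, $I^j_i(A_i)$ is an $\varepsilon_i$-net of $X_j$: $X_j\subset\bigcup_{a\in A_i}B_{d_j}(x^j_a,\varepsilon_i)$; (2) for every $i\in\mathbb N$ and every $a=(a_1,\dots,a_{i+1})\in A_{i+1}$, $x^j_{(a_1,\dots,a_i,a_{i+1})}=I^j_{i+1}(a)\in B_{d_j}\big(I^j_i(p_i(a)),2\varepsilon_i\big)=B_{d_j}\big(x^j_{(a_1,\dots,a_i)},2\varepsilon_i\big)$; (3)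 the set $\mathcal N_j=I^j(A)=\{x^j_a:a\in A\}=\bigcup_{i\in\mathbb N}I^j_i(A_i)$ is a countable dense subset of $X_j$.
   Context: $B_{d_j}(x,r)$ denotes the open ball of radius $r$ about $x$ in $(X_j,d_j)$. *)

(* Defs.v *)
From mathcomp Require Import all_boot all_order all_algebra.
From mathcomp Require Import all_classical all_reals.
Set Implicit Arguments. Unset Strict Implicit. Unset Printing Implicit Defensive.
Import Order.TTheory GRing.Theory Num.Theory.
Local Open Scope ring_scope.
Local Open Scope classical_set_scope.

Definition is_metric (R : realType) (T : Type) (d : T -> T -> R) : Prop :=
  (forall x y, 0 <= d x y) /\
  (forall x y, d x y = 0 <-> x = y) /\
  (forall x y, d x y = d y x) /\
  (forall x y z, d x z <= d x y + d y z).

Definition ball_d (R : realType) (T : Type) (d : T -> T -> R) (x : T) (r : R) : set T :=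
  [set y | d x y < r].

Definition covered_by (R : realType) (T : Type) (d : T -> T -> R) (n : nat) (r : R) : Prop :=
  exists c : nat -> T, forall x : T, exists2 k, (k < n)%N & ball_d d (c k) r x.

Definition eps (R : realType) (i : nat) : R := 2%:R ^- i.

(* A_i = { (a_1,...,a_i) : 1 <= a_k <= N_k }, tuples encoded as seq nat,
   a_k = nth 0 a k.-1 *)
Definition Aset (N : nat -> nat) (i : nat) : set (seq nat) :=
  [set a | size a = i /\ forall k, (1 <= k <= i)%N -> (1 <= nth 0 a k.-1 <= N k)%N].

(* A = disjoint union of the A_i, i >= 1 (disjoint since sizes differ) *)
Definition Aall (N : nat -> nat) : set (seq nat) :=
  [set a | exists2 i, (1 <= i)%N & Aset N i a].

Definition proj_p (i : nat) (a : seq nat) : seq nat := take i a.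

Definition dense_in (R : realType) (T : Type) (d : T -> T -> R) (S : set T) : Prop :=
  forall x (r : R), 0 < r -> exists2 y, S y & ball_d d x r y.

(* Main.v *)
Require Import Defs.
From mathcomp Require Import all_boot all_order all_algebra.
From mathcomp Require Import all_classical all_reals.
From mathcomp Require Import zify.
Import Order.TTheory GRing.Theory Num.Theory.
Local Open Scope ring_scope.
Local Open Scope classical_set_scope.

Fixpoint Gf (R : realType) (T : Type) (dd : T -> T -> R) (C : nat -> nat -> T) (x0 : T)
  (n : nat) (a : seq nat) : T :=
  match n with
  | 0%N => x0
  | m.+1 => let c := C m.+1 (nth 0%N a m).-1 in
     if m == 0%N then c else
     let y := Gf R T dd C x0 m (take m a) in
     if dd y c < 2%:R * eps R m then c else y
  end.

Lemma eps_gt0 (R : realType) i : 0 < eps R i.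
Proof. by rewrite /eps invr_gt0 exprn_gt0. Qed.

Lemma epsS (R : realType) i : eps R i.+1 < eps R i.
Proof.
rewrite /eps exprS invfM -[X in _ < X]mul1r ltr_pM2r ?eps_gt0 //.
by rewrite invf_lt1 // ltr1n.
Qed.

Lemma eps_small (R : realType) (r : R) : 0 < r -> exists i, (1 <= i)%N /\ eps R i < r.
Proof.
move=> r0; set n := Num.Def.archi_bound r^-1.
exists n.+1; split => //.
have h1 : r^-1 < n%:R by apply: archi_boundP; rewrite invr_ge0 ltW.
have h2 : (n%:R : R) < 2%:R ^+ n.+1.
  by rewrite -natrX ltr_nat (leq_trans (ltn_expl n (isT : (1 < 2)%N))) // leq_pexp2l.
rewrite /eps -[X in _ < X]invrK ltf_pV2 ?posrE ?exprn_gt0 ?invr_gt0 //.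
exact: lt_trans h1 h2.
Qed.

Theorem proposition3p2 (R : realType) (X : nat -> Type)
  (d : forall j, X j -> X j -> R)
  (hmet : forall j, is_metric (d j))
  (hne : forall j, inhabited (X j))
  (D : R) (hD : 0 < D)
  (hbd : forall j (x y : X j), d j x y <= D)
  (heqc : forall r : R, 0 < r <= D -> exists n : nat, forall j, covered_by (d j) n r)
  (N : nat -> nat)
  (hN : forall i, (1 <= i)%N -> forall j, covered_by (d j) (N i) (eps R i)) :
  forall j, exists I : seq nat -> X j,
    (forall i, (1 <= i)%N -> forall x : X j,
        exists2 a, Aset N i a & ball_d (d j) (I a) (eps R i) x) /\
    (forall i, (1 <= i)%N -> forall a, Aset N i.+1 a ->
        ball_d (d j) (I (proj_p i a)) (2%:R * eps R i) (I a)) /\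
    (countable (I @` Aall N) /\ dense_in (d j) (I @` Aall N)).
Proof.
move=> j; case: (hne j) => x0.
have HC0 : forall i, exists c : nat -> X j, (1 <= i)%N -> forall x : X j,
    exists2 k, (k < N i)%N & d j (c k) x < eps R i.
  move=> i.
  case: (posnP i) => [->|ip]; first by exists (fun=> x0).
  by case: (hN i ip j) => c Hc; exists c.
case: (boolp.choice HC0) => C HC.
case: (hmet j) => [d0 [dE [dC dT]]].
set I := fun a : seq nat => Gf R (X j) (d j) C x0 (size a) a.
have cov : forall i, (1 <= i)%N -> forall x : X j,
    exists2 a, Aset N i a & d j (I a) x < eps R i.
  elim=> // m IH _ x.
  case: (HC m.+1 isT x) => k kN Hk.
  case: (posnP m) => [m0|m0].
    subst m; exists [:: k.+1]; last by rewrite /I /=.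
    split=> // k'; rewrite -eqn_leq => /eqP <- /=; exact: kN.
  case: (IH m0 x) => a' [sa' Ha'] Hd.
  exists (rcons a' k.+1).
    split; first by rewrite size_rcons sa'.
    move=> k' /andP[k1 k2]; rewrite nth_rcons sa'.
    case: (ltnP k'.-1 m) => h.
      by apply: Ha'; rewrite k1 /=; lia.
    have -> : k'.-1 = m by lia.
    have -> : k' = m.+1 by lia.
    by rewrite eqxx /=.
  rewrite /I size_rcons sa' /= nth_rcons sa' ltnn eqxx /=.
  have -> : (m == 0%N) = false by lia.
  rewrite -cats1 -sa' take_size_cat // sa' /=.
  have -> : Gf R (X j) (d j) C x0 m a' = I a' by rewrite /I sa'.
  rewrite ifT //.
  apply: (le_lt_trans (dT _ x _)).
  rewrite (dC x) mulr2n mulrDl mul1r ltrD //.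
  exact: lt_trans Hk (epsS _ _).
exists I; split; first exact: cov.
split.
  move=> i i1 a [sa Ha]; rewrite /ball_d /= /I /proj_p sa /=.
  have -> : (i == 0%N) = false by lia.
  rewrite size_takel ?sa //.
  case: ifP => // _; rewrite (proj2 (dE _ _) erefl) mulr_gt0 ?eps_gt0 //.
split; first exact: sub_countable (card_image_le _ _) (countableP _).
move=> x r r0.
case: (eps_small R r r0) => i [i1 Hi].
case: (cov i i1 x) => a Ha Hd.
exists (I a); first by exists a => //; exists i.
rewrite /ball_d /= dC; exact: lt_trans Hd Hi.
Qed.
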